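(* Let $\Lambda$ be the set of all injections $t$ whose domain $\operatorname{dom}t$ is a countable ordinal, with values in $\omega=\{0,1,2,\dots\}$, and whose range is a co-infinite subset of $\omega$, ordered by extension ($t\preceq u$ iff $\operatorname{dom}t\subseteq\operatorname{dom}u$ and $u|_{\operatorname{dom}t}=t$). Let $\lambda(t)=\sum_{\alpha\in\operatorname{dom}t}2^{-t(\alpha)}$ and let $\mathcal{T}_\lambda$ be the topology on $\Lambda$ in which a base of neighbourhoods of $t$ consists of the sets $\{u\in\Lambda: t\preceq u,\ \lambda(u)<\lambda(t)+\epsilon\}$, $\epsilon>0$. Then $(\Lambda,\mathcal{T}_\lambda)$ is a Baire space.
   Context: A Baire space is a topological space in which every countable intersection of dense open sets is dense. *)

(* Defs.v *)
From HB Require Import structures.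
From mathcomp Require Import all_boot all_order all_algebra.
From mathcomp Require Import all_classical all_reals all_analysis.
From mathcomp Require Import Rstruct Rstruct_topology.
Set Implicit Arguments. Unset Strict Implicit. Unset Printing Implicit Defensive.
Import Order.TTheory GRing.Theory Num.Theory.
Local Open Scope classical_set_scope.
Local Open Scope ring_scope.

Notation RR := Rdefinitions.R.

(* An element t of Lambda (injection from a countable ordinal into nat with
   co-infinite range) is encoded by its range [rng t] together with the
   strict well-order [ord t] on the range transported from dom t:
   [ord t m n] iff t^-1(m) < t^-1(n).  Conversely every strict well-order on
   a subset of nat has a countable ordinal order type, and t is recovered as
   the enumeration of the range in that order. *)
Record Lambda := MkLambda {
  rng : set nat ;
  ord : nat -> nat -> Prop ;
  ord_field : forall m n, ord m n -> rng m /\ rng n ;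
  ord_irrefl : forall m, ~ ord m m ;
  ord_trans : forall m n p, ord m n -> ord n p -> ord m p ;
  ord_total : forall m n, rng m -> rng n -> m <> n -> ord m n \/ ord n m ;
  ord_wf : well_founded ord ;
  rng_coinfinite : ~ finite_set (~` rng)
}.

HB.instance Definition _ := gen_eqMixin Lambda.
HB.instance Definition _ := gen_choiceMixin Lambda.

(* t ≼ u : dom t is an initial segment of dom u and u restricted to dom t is t,
   i.e. rng t ⊆ rng u, rng t is an initial segment of (rng u, ord u),
   and the two orders agree on rng t. *)
Definition ext (t u : Lambda) : Prop :=
  [/\ rng t `<=` rng u,
      (forall m n, rng t n -> ord u m n -> rng t m) &
      (forall m n, rng t m -> rng t n -> (ord t m n <-> ord u m n))].

Definition lam (t : Lambda) : \bar RR :=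
  (\sum_(i <oo | i \in rng t) ((2 : RR) ^- i)%:E)%E.

Definition lbase (t : Lambda) (eps : RR) : set Lambda :=
  [set u | ext t u /\ (lam u < lam t + eps%:E)%E].

Definition lopen (A : set Lambda) : Prop :=
  forall t, A t -> exists2 eps : RR, 0 < eps & lbase t eps `<=` A.

Lemma lopenT : lopen setT.
Proof. by move=> t _; exists 1. Qed.

Lemma lopenI : setI_closed lopen.
Proof.
move=> A B oA oB t [/oA [e1 e10 s1] /oB [e2 e20 s2]].
exists (Num.min e1 e2); first by rewrite lt_min e10 e20.
move=> u [tu lu]; split.
- apply: s1; split => //; apply: (lt_le_trans lu).
  by rewrite leeD2l // lee_fin ge_min lexx.
- apply: s2; split => //; apply: (lt_le_trans lu).
  by rewrite leeD2l // lee_fin ge_min lexx orbT.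
Qed.

Lemma lopen_bigU (I : Type) (f : I -> set Lambda) :
  (forall i, lopen (f i)) -> lopen (\bigcup_i f i).
Proof.
move=> oF t [i _ /oF [e e0 s]]; exists e; first by [].
by move=> u /s fu; exists i.
Qed.

HB.instance Definition _ :=
  isOpenTopological.Build Lambda lopenT lopenI lopen_bigU.

Definition baire_space (T : topologicalType) : Prop :=
  forall F : nat -> set T, (forall n, open (F n)) -> (forall n, dense (F n)) ->
    dense (\bigcap_n F n).

(* Main.v *)
Require Import Defs.
From HB Require Import structures.
From mathcomp Require Import all_boot all_order all_algebra.
From mathcomp Require Import all_classical all_reals all_analysis.
From mathcomp Require Import Rstruct Rstruct_topology lra.
Set Implicit Arguments. Unset Strict Implicit. Unset Printing Implicit Defensive.
Import Order.TTheory GRing.Theory Num.Theory.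
Local Open Scope classical_set_scope.
Local Open Scope ring_scope.

Lemma openE (A : set Lambda) : open A = lopen A.
Proof. by []. Qed.

Definition fw (i : nat) : \bar RR := ((2 : RR) ^- i)%:E.
Lemma fw_ge0 i : (0 <= fw i)%E.
Proof. by rewrite /fw lee_fin invr_ge0 exprn_ge0. Qed.

Lemma psum N : \sum_(0 <= i < N) ((2:RR) ^- i) = 2 - 2 * (2:RR) ^- N.
Proof.
elim: N => [|N IH]; first by rewrite big_geq // expr0 invr1 mulr1 subrr.
rewrite big_nat_recr //= IH.
have -> : (2:RR) ^- N = 2 * (2:RR) ^- N.+1.
  by rewrite exprS invfM mulrA divff ?mul1r.
lra.
Qed.

Local Open Scope ereal_scope.
Lemma psumE N : \sum_(0 <= i < N) fw i <= 2%:E.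
Proof.
rewrite /fw sumEFin psum lee_fin.
have : ((0:RR) <= 2 * (2:RR) ^- N)%R by rewrite mulr_ge0 // invr_ge0 exprn_ge0.
lra.
Qed.

Lemma lam_le2 t : lam t <= 2%:E.
Proof.
rewrite /lam; apply: lime_le.
  by apply: is_cvg_nneseries => n _ _; exact: fw_ge0.
apply: nearW => n /=; apply: le_trans (psumE n).
rewrite [leLHS]big_mkcond /=.
apply: lee_sum => i _; case: ifP => // _; exact: fw_ge0.
Qed.

Lemma lam_ge0 t : 0 <= lam t.
Proof. by apply: nneseries_ge0 => n _ _; exact: fw_ge0. Qed.

Lemma lam_fin t : lam t \is a fin_num.
Proof.
by rewrite ge0_fin_numE ?lam_ge0 // (le_lt_trans (lam_le2 t)) // ltry.
Qed.

Lemma ext_refl t : ext t t.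
Proof. by split => // m n _ /ord_field []. Qed.

Lemma ext_trans t u v : ext t u -> ext u v -> ext t v.
Proof.
move=> [tu1 tu2 tu3] [uv1 uv2 uv3]; split.
- by move=> x /tu1 /uv1.
- move=> m n tn vmn.
  have um : rng u m by apply: uv2 vmn; exact: tu1.
  apply: (tu2 m n tn); apply/(uv3 _ _ um (tu1 _ tn)) => //.
- move=> m n tm tn; rewrite (tu3 _ _ tm tn); exact: uv3 (tu1 _ tm) (tu1 _ tn).
Qed.

Lemma lam_mono t u : rng t `<=` rng u -> lam t <= lam u.
Proof.
move=> tu; apply: subset_lee_nneseries => [i _|i]; first exact: fw_ge0.
by rewrite !in_setE => /tu.
Qed.

Lemma lam_add t u k : rng t `<=` rng u -> rng u k -> ~ rng t k ->
  fw k + lam t <= lam u.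
Proof.
move=> tu uk tk; rewrite [leRHS](@nneseriesD1 _ _ k) //; last by rewrite in_setE.
  rewrite leeD2l //; apply: subset_lee_nneseries => [i _|i]; first exact: fw_ge0.
  rewrite !in_setE => ti; apply/andP; split; first by rewrite in_setE; exact: tu.
  by apply/eqP => ik; apply: tk; rewrite -ik.
Qed.

Lemma lamE t : lam t = (fine (lam t))%:E.
Proof. by rewrite fineK // lam_fin. Qed.

Lemma lbase_self t (e : RR) : (0 < e)%R -> lbase t e t.
Proof.
move=> e0; split; first exact: ext_refl.
rewrite lamE -EFinD lte_fin; lra.
Qed.

Lemma lbase_open t (e : RR) : lopen (lbase t e).
Proof.
move=> u [tu]; rewrite (lamE u) (lamE t) -EFinD lte_fin => lu.
exists (fine (lam t) + e - fine (lam u))%R; first lra.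
move=> v [uv]; rewrite (lamE v) (lamE u) -EFinD lte_fin => lv; split.
  exact: ext_trans uv.
rewrite (lamE v) (lamE t) -EFinD lte_fin; lra.
Qed.

Lemma coinf_big (A : set nat) : ~ finite_set A ->
  forall n, exists k, (n <= k)%N /\ A k.
Proof.
move=> Ai n; apply: contrapT => H; apply: Ai.
apply: (@sub_finite_set _ _ `I_n) => // k Ak /=.
rewrite ltnNge; apply/negP => nk; apply: H; by exists k.
Qed.

Lemma big_coinf (A : set nat) : (forall n, exists k, (n <= k)%N /\ A k) ->
  ~ finite_set A.
Proof.
move=> H /finite_fsetP [X AX].
have [k [lek Ak]] := H (\max_(x <- (finmap.enum_fset X)) x).+1.
have : (k <= \max_(x <- (finmap.enum_fset X)) x)%N.
  apply: leq_bigmax_seq => //; move: Ak; rewrite AX /=; done.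
by rewrite leqNgt lek.
Qed.

Section Union.
Variable T : nat -> Lambda.
Hypothesis chain : forall a c, (a <= c)%N -> ext (T a) (T c).

Let U := \bigcup_n rng (T n).
Let O := fun m n => exists c, ord (T c) m n.

Let ordup a c m n : (a <= c)%N -> ord (T a) m n -> ord (T c) m n.
Proof.
move=> ac h; have [f1 f2] := ord_field h.
by have [_ _ /(_ _ _ f1 f2) []] := chain ac; auto.
Qed.

Let pred_in k a p m : ord (T k) p m -> rng (T a) m -> ord (T a) p m.
Proof.
move=> h am.
have h' := ordup (leq_maxr a k) h.
have [_ c2 c3] := chain (leq_maxl a k).
have ap : rng (T a) p by exact: c2 h'.
by apply/(c3 _ _ ap am).
Qed.

Let f_field m n : O m n -> U m /\ U n.
Proof. by move=> [c /ord_field [h1 h2]]; split; exists c. Qed.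

Let f_irrefl m : ~ O m m.
Proof. by move=> [c /ord_irrefl]. Qed.

Let f_trans m n p : O m n -> O n p -> O m p.
Proof.
move=> [a h1] [b h2]; exists (maxn a b).
apply: ord_trans (ordup (leq_maxl a b) h1) (ordup (leq_maxr a b) h2).
Qed.

Let f_total m n : U m -> U n -> m <> n -> O m n \/ O n m.
Proof.
move=> [a _ am] [b _ bn] mn.
have [_ _ _ ] := chain (leq_maxl a b); have [s1 _ _] := chain (leq_maxl a b).
have [s2 _ _] := chain (leq_maxr a b).
case: (ord_total (s1 _ am) (s2 _ bn) mn) => h; [left|right]; by exists (maxn a b).
Qed.

Let f_wf : well_founded O.
Proof.
have key : forall a m, rng (T a) m -> Acc O m.
  move=> a; apply: (well_founded_ind (@ord_wf (T a))) => m IH am.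
  constructor => p [k h]; have h' := pred_in h am.
  by apply: (IH _ h'); have [] := ord_field h'.
move=> m; constructor => p [k h]; apply: (key k); by have [] := ord_field h.
Qed.

Hypothesis coinf : ~ finite_set (~` U).

Lemma union_chain : exists u : Lambda, rng u = U /\ forall n, ext (T n) u.
Proof.
exists (@MkLambda U O f_field f_irrefl f_trans f_total f_wf coinf); split => //.
move=> n; split => /=.
- by move=> x h; exists n.
- move=> m p np [k h]; have := pred_in h np; by move/ord_field => [].
- move=> m p nm np; split => [h|[k h]]; first by exists n.
  exact: pred_in h np.
Qed.

Lemma lam_sup (u : Lambda) (L : \bar RR) m : rng u = U ->
  (forall c, (m <= c)%N -> lam (T c) <= L) -> lam u <= L.
Proof.
move=> hu HL; rewrite /lam; apply: lime_le.
  by apply: is_cvg_nneseries => n _ _; exact: fw_ge0.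
apply: nearW => N /=.
have [c Hc] : exists c, forall i, (i < N)%N -> rng u i -> rng (T c) i.
  elim: N => [|N [c IH]]; first by exists 0%N.
  have [uN|nuN] := pselect (rng u N).
    have [c' _ hc'] : U N by rewrite -hu.
    exists (maxn c c') => i; rewrite ltnS leq_eqVlt => /orP [/eqP -> _|iN ui].
      by have [s _ _] := chain (leq_maxr c c'); exact: s.
    have [s _ _] := chain (leq_maxl c c'); apply: s. exact: (IH i iN ui).
  exists c => i; rewrite ltnS leq_eqVlt => /orP [/eqP -> //|iN ui]; exact: (IH i iN ui).
apply: le_trans (HL (maxn c m) (leq_maxr c m)).
apply: le_trans (nneseries_lim_ge N _); last by move=> n _ _; exact: fw_ge0.
rewrite big_nat_cond [leRHS]big_nat_cond.
apply: lee_sum_nneg_subset => [i|i _]; last exact: fw_ge0.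
rewrite -!topredE /= => /andP [iN ui]; rewrite iN /=.
have [s _ _] := chain (leq_maxl c m); rewrite in_setE; apply: s; apply: Hc => //.
by move: ui; rewrite in_setE.
Qed.
End Union.

Local Close Scope ereal_scope.
Lemma lbase_mono t (e1 e2 : RR) : (e1 <= e2)%R -> lbase t e1 `<=` lbase t e2.
Proof.
move=> le u [tu lu]; split => //; apply: (lt_le_trans lu).
by rewrite leeD2l ?lee_fin // lam_fin.
Qed.

Definition Good (F : nat -> set Lambda) n (t : Lambda) (e : RR) (s : Lambda) (e' : RR) k :=
  [/\ (0 < e')%R, (e' <= (2:RR) ^- k)%R, ~ rng s k, (n <= k)%N &
      lbase s (2 * e')%R `<=` lbase t e `&` F n].

Lemma step (F : nat -> set Lambda) : (forall n, open (F n)) ->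
  (forall n, dense (F n)) -> forall n t (e : RR), (0 < e)%R ->
  exists s e' k, Good F n t e s e' k.
Proof.
move=> oF dF n t e e0.
have ne : lbase t e !=set0 by exists t; exact: lbase_self.
have [s [st Fs]] := dF n (lbase t e) ne (@lbase_open t e).
have : lopen (lbase t e `&` F n) by apply: lopenI; [exact: lbase_open|exact: oF].
move=> /(_ s (conj st Fs)) [d d0 sd].
have [k [nk sk]] := coinf_big (@rng_coinfinite s) n.
have p0 : (0 < (2:RR) ^- k)%R by rewrite invr_gt0 exprn_gt0.
exists s, (Num.min (d / 2) ((2:RR) ^- k)), k; split => //.
- by rewrite lt_min p0 andbT divr_gt0.
- by rewrite ge_min lexx orbT.
- apply: subset_trans sd; apply: lbase_mono.
  have : (Num.min (d / 2) ((2:RR) ^- k) <= d / 2)%R by rewrite ge_min lexx.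
  lra.
Qed.

Theorem lemma10p1 : baire_space Lambda.
Proof.
move=> F oF dF O [x Ox] oO.
have [e0 e00 sub0] := oO x Ox.
have : forall p : nat * (Lambda * RR), exists q : (Lambda * RR) * nat,
    (0 < p.2.2)%R -> Good F p.1 p.2.1 p.2.2 q.1.1 q.1.2 q.2.
  move=> [n [t e]] /=; have [e0'|ne] := pselect (0 < e)%R.
    by have [s [e' [k G]]] := step oF dF n t e0'; exists (s, e', k).
  by exists (t, e, 0%N) => /ne.
move=> /choice [g Hg].
pose st := fix st n := if n is m.+1 then ((g (m, st m)).1.1, (g (m, st m)).1.2)
  else (x, e0).
pose T n := (st n).1; pose E n := (st n).2; pose K n := (g (n, st n)).2.
have pos n : (0 < E n)%R.
  elim: n => [|n IH]; first exact: e00.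
  by have [] := Hg (n, st n) IH.
have G n : Good F n (T n) (E n) (T n.+1) (E n.+1) (K n) by exact: Hg (n, st n) (pos n).
have nest n : lbase (T n.+1) (E n.+1) `<=` lbase (T n) (E n).
  have [p1 _ _ _ sb] := G n.
  move=> u /(@lbase_mono _ _ (2 * E n.+1)) h.
  have /h /sb [] // : (E n.+1 <= 2 * E n.+1)%R by lra.
have nestk k m : lbase (T (m + k)%N) (E (m + k)%N) `<=` lbase (T m) (E m).
  elim: k => [|k IH]; first by rewrite addn0.
  by rewrite addnS; apply: subset_trans IH; exact: nest.
have inb m c : (m <= c)%N -> lbase (T m) (E m) (T c).
  move=> mc; rewrite -(subnKC mc); apply: nestk; exact: lbase_self.
have chain m c : (m <= c)%N -> ext (T m) (T c) by move=> /inb [].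
have coinf : ~ finite_set (~` \bigcup_n rng (T n)).
  apply: big_coinf => n; exists (K n).
  have [p1 pk nk nK _] := G n; split => // -[c _ ck].
  have c1 : (n.+1 <= maxn c n.+1)%N by rewrite leq_maxr.
  have [_ lc] := inb _ _ c1.
  have [s1 _ _] := chain _ _ (leq_maxl c n.+1).
  have ha := @lam_add (T n.+1) (T (maxn c n.+1)) (K n).
  have [s2 _ _] := chain _ _ c1.
  have := ha s2 (s1 _ ck) nk.
  move: lc; rewrite /fw (lamE (T (maxn c n.+1))) (lamE (T n.+1)) -!EFinD !lte_fin !lee_fin.
  lra.
have [u [hu ext_u]] := union_chain chain coinf.
have key n : lbase (T n.+1) (2 * E n.+1) u.
  split; first exact: ext_u.
  apply: (@le_lt_trans _ _ (lam (T n.+1) + (E n.+1)%:E)%E).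
    apply: (lam_sup chain (m := n.+1)) => // c /inb [_] /ltW //.
  by rewrite lteD2lE ?lam_fin // lte_fin; have := pos n.+1; lra.
exists u; split.
  by apply: sub0; have [_ _ _ _ sb] := G 0%N; have [] := sb _ (key 0%N).
move=> n _; have [_ _ _ _ sb] := G n; by have [] := sb _ (key n).
Qed.
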